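(* Consider the waning-immunity model described in the context, with $\beta_0>0$. Let $C>0$ be a constant as follows: for all sufficiently small $\delta\ge0$, every endemic equilibrium with $I^*\in[0,1]$ has $I^*\in J_1\cup J_2$, where $J_i=[y_i-C\sqrt\delta,\,y_i+C\sqrt\delta]$ and $y_1\le y_2$ are the real roots of $$1+\frac{r}{\beta_0x+\mu}-\frac{\beta_n}{\beta_nx+\mu+\omega_n}-\frac{\omega_n\beta_0}{(\beta_0x+\mu)(\beta_nx+\mu+\omega_n)}=0.$$ Suppose $J_i\subset(0,1]$ for some $i\in\{1,2\}$. Then for $\delta$ sufficiently small, provided $|y_1-y_2|\ge\delta^{1/3}$, there exists a unique endemic equilibrium of the system with $I^*\in J_i$.
   Context: Model: Fix an integer $n\ge 1$ and parameters $\delta\ge 0$ (rate of waning immunity), $\omega\ge 0$ (vaccination rate), $r>0$ (recovery rate), $\mu>0$ (birth = death rate), coverages $p_0=0$, $p_1,\dots,p_n\in[0,1]$, and transmission rates $0\le\beta_0\le\beta_1\le\dots\le\beta_n$ with $\beta_0<\beta_n$. Write $\omega_i=p_i\omega$, $\delta_i=(1-p_i)\delta$ (so $\delta_0=\delta$). The ODE system for $(S_0,\dots,S_n,I)$ is $$S_0'=\sum_{i=1}^n\omega_iS_i-\delta S_0+rI-\beta_0IS_0-\mu S_0,$$ $$S_i'=-\omega_iS_i+\delta_{i-1}S_{i-1}-\delta_iS_i-\beta_iIS_i-\mu S_i\quad(1\le i\le n-1),$$ $$S_n'=\mu-\omega_nS_n+\delta_{n-1}S_{n-1}-\beta_nIS_n-\mu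 S_n,$$ $$I'=I\sum_{i=0}^n\beta_iS_i-rI-\mu I,$$ with the normalization $\sum_iS_i+I=1$. An endemic equilibrium is an equilibrium $(S_0^*,\dots,S_n^*,I^* )$ of this system satisfying the normalization with $I^*\neq0$. *)

(* Defs.v *)
From HB Require Import structures.
From mathcomp Require Import all_boot all_order all_algebra.
From mathcomp Require Import reals exp.
Set Implicit Arguments. Unset Strict Implicit. Unset Printing Implicit Defensive.
Import Order.TTheory GRing.Theory Num.Theory.
Local Open Scope ring_scope.

(* Indices 0..n are natural numbers; parameters p, beta and the state S are
   nat-indexed, only the values at 0..n matter. omega_i = p_i omega,
   delta_i = (1 - p_i) delta. *)

Definition is_equilibrium (R : realType) (n : nat) (delta omega r mu : R)
    (p beta : nat -> R) (S : nat -> R) (I : R) : Prop :=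
  let om i := p i * omega in
  let de i := (1 - p i) * delta in
  [/\ \sum_(1 <= i < n.+1) om i * S i - delta * S 0%N + r * I
        - beta 0%N * I * S 0%N - mu * S 0%N = 0,
      (forall i, (1 <= i < n)%N ->
         - om i * S i + de i.-1 * S i.-1 - de i * S i - beta i * I * S i
         - mu * S i = 0),
      mu - om n * S n + de n.-1 * S n.-1 - beta n * I * S n - mu * S n = 0,
      I * (\sum_(i < n.+1) beta i * S i) - r * I - mu * I = 0
    & \sum_(i < n.+1) S i + I = 1].

Definition is_endemic_equilibrium (R : realType) (n : nat) (delta omega r mu : R)
    (p beta : nat -> R) (S : nat -> R) (I : R) : Prop :=
  is_equilibrium n delta omega r mu p beta S I /\ I <> 0.

Definition is_root_eq (R : realType) (n : nat) (omega r mu : R)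
    (p beta : nat -> R) (x : R) : Prop :=
  let wn := p n * omega in
  [/\ beta 0%N * x + mu != 0,
      beta n * x + mu + wn != 0
    & 1 + r / (beta 0%N * x + mu) - beta n / (beta n * x + mu + wn)
        - wn * beta 0%N / ((beta 0%N * x + mu) * (beta n * x + mu + wn)) = 0].

Definition in_J (R : realType) (C delta y x : R) : Prop :=
  y - C * Num.sqrt delta <= x <= y + C * Num.sqrt delta.

(* Main.v *)
From HB Require Import structures.
From mathcomp Require Import all_boot all_order all_algebra.
From mathcomp Require Import reals exp.
From mathcomp Require Import lra ring.
From mathcomp Require Import boolp classical_sets topology normedtype.
Require Import Defs.
Import Order.TTheory GRing.Theory Num.Theory.
Import numFieldNormedType.Exports.
Set Implicit Arguments. Unset Strict Implicit. Unset Printing Implicit Defensive.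
Local Open Scope ring_scope.

Lemma lip_cont (R : realType) (f : R -> R) L : 0 <= L ->
  (forall x1 x2, `|f x1 - f x2| <= L * `|x1 - x2|) -> continuous f.
Proof.
move=> L0 hf x; apply/cvgrPdist_lt => e e0.
have L1 : 0 < L + 1 by lra.
have eL : 0 < e / (L + 1) by apply: divr_gt0.
near=> z.
apply: (le_lt_trans (hf x z)).
have : `|x - z| < e / (L + 1).
  near: z; apply/nbhs_ballP; exists (e / (L + 1)); first exact: eL.
  by move=> z; rewrite /ball /=.
move=> hz; apply: (le_lt_trans (y := (L + 1) * `|x - z|)).
  by apply: ler_wpM2r => //; lra.
by rewrite -ltr_pdivlMl // mulrC.
Unshelve. all: end_near.
Qed.

Definition clamp (R : realType) (a b x : R) := if x < a then a else if b < x then b else x.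

Lemma clamp_lip (R : realType) (a b : R) x y : a <= b ->
  `|clamp a b x - clamp a b y| <= `|x - y|.
Proof.
move=> ab; rewrite /clamp.
have h1 := ler_norm (x - y); have h2 := ler_norm (y - x); rewrite distrC in h2.
case: (ltP x a) => hx; case: (ltP y a) => hy; try case: (ltP b x) => hbx;
  try case: (ltP b y) => hby; rewrite ler_norml; apply/andP; split; lra.
Qed.

Lemma clamp_in (R : realType) (a b x : R) : a <= b -> a <= clamp a b x <= b.
Proof.
move=> ab; rewrite /clamp; case: (ltP x a) => hx; first by rewrite lexx ab.
case: (ltP b x) => hbx; first by rewrite ab lexx.
by rewrite hx hbx.
Qed.

Lemma clamp_id (R : realType) (a b x : R) : a <= x <= b -> clamp a b x = x.
Proof.
move=> /andP[h1 h2]; rewrite /clamp; case: (ltP x a) => hx; first lra.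
case: (ltP b x) => hbx //; lra.
Qed.

Lemma ivt_lip (R : realType) (f : R -> R) a b L : a <= b -> 0 <= L ->
  (forall x1 x2, a <= x1 <= b -> a <= x2 <= b -> `|f x1 - f x2| <= L * `|x1 - x2|) ->
  (f a <= 0 <= f b \/ f b <= 0 <= f a) ->
  exists c, a <= c <= b /\ f c = 0.
Proof.
move=> ab L0 hf hs.
pose g x := f (clamp a b x).
have gc : continuous g.
  apply: (lip_cont L0) => x1 x2; apply: le_trans (hf _ _ (clamp_in _ ab) (clamp_in _ ab)) _.
  by apply: ler_wpM2l => //; exact: clamp_lip.
have ga : g a = f a by rewrite /g clamp_id // lexx ab.
have gb : g b = f b by rewrite /g clamp_id // lexx ab.
have hmid : Num.min (g a) (g b) <= 0 <= Num.max (g a) (g b).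
  rewrite ga gb; case: hs => [/andP[u v]|/andP[u v]].
    by rewrite ge_min u /= le_max v orbT.
  by rewrite ge_min u orbT /= le_max v.
have [c hc gc0] := @IVT R g a b 0 ab (continuous_subspaceT gc) hmid.
exists c; move: hc; rewrite in_itv /= => hc; split => //.
by rewrite -gc0 /g clamp_id.
Qed.

Lemma sign_help (R : realType) (k h y y' KEd Ep Em : R) :
  0 < k -> 0 <= h -> h <= `|y - y'| / 4 -> KEd <= k * h * `|y - y'| / 4 ->
  `|Ep| <= KEd -> `|Em| <= KEd ->
  let Gp := - k * ((y + h - y) * (y + h - y')) + Ep in
  let Gm := - k * ((y - h - y) * (y - h - y')) + Em in
  (Gm <= 0 <= Gp) \/ (Gp <= 0 <= Gm).
Proof.
move=> k0 h0 hh hK; rewrite !ler_norml => /andP[p1 p2] /andP[m1 m2] Gp Gm.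
rewrite /Gp /Gm.
have kh : 0 <= k * h by rewrite mulr_ge0 // ltW.
have khh : 0 <= k * h * h by rewrite mulr_ge0.
have khd : k * h * h <= k * h * (`|y - y'| / 4) by apply: ler_wpM2l.
case: (ltP 0 (y - y')) => s.
  rewrite gtr0_norm // in hh hK khd.
  right; apply/andP; split; nra.
rewrite ler0_norm // in hh hK khd.
left; apply/andP; split; nra.
Qed.

Lemma uniq_help (R : realType) (k h y y' KEd x1 x2 : R) :
  0 < k -> 0 <= h -> h <= 1 -> y != y' -> h <= `|y - y'| / 4 -> KEd <= k * h * `|y - y'| / 4 ->
  y - h <= x1 <= y + h -> y - h <= x2 <= y + h ->
  `|k * (x1 - x2) * (x1 + x2 - y - y')| <= KEd * `|x1 - x2| -> x1 = x2.
Proof.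
move=> k0 h0 h1 ne hh hK /andP[a1 b1] /andP[a2 b2] hb.
have dd0 : 0 < `|y - y'| by rewrite normr_gt0 subr_eq0.
have hs : `|y - y'| / 2 <= `|x1 + x2 - y - y'|.
  case: (ltP 0 (y - y')) => s.
    rewrite gtr0_norm // in hh *; rewrite ger0_norm; lra.
  rewrite ler0_norm // in hh *; rewrite ler0_norm; lra.
rewrite !normrM (gtr0_norm k0) in hb.
have A0 := normr_ge0 (x1 - x2).
have e1 : k * `|x1 - x2| * (`|y - y'| / 2) <= k * `|x1 - x2| * `|x1 + x2 - y - y'|.
  by apply: ler_wpM2l => //; rewrite mulr_ge0 // ltW.
have e2 : KEd * `|x1 - x2| <= k * `|y - y'| / 4 * `|x1 - x2|.
  apply: ler_wpM2r => //; apply: le_trans hK _.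
  have : 0 <= k * `|y - y'| by rewrite mulr_ge0 // ltW.
  nra.
have : k * `|y - y'| * `|x1 - x2| <= 0.
  move: e1 e2 hb; set A := `|x1 - x2|; set D := `|y - y'|; set S := `|_ + _|.
  lra.
rewrite pmulr_rle0 ?mulr_gt0 // normr_le0 subr_eq0 => /eqP //.
Qed.

Section BL.
Variable R : realType.
Variables m M dstar : R.
Hypothesis hmM : m <= M.
Hypothesis hd : 0 <= dstar.

Definition inrng (x : R) := m <= x <= M.

Definition bl (B : R) (f : R -> R) :=
  (forall x, inrng x -> `|f x| <= B) /\
  (forall x1 x2, inrng x1 -> inrng x2 -> `|f x1 - f x2| <= B * `|x1 - x2|).

Lemma inr_m : inrng m. Proof. by rewrite /inrng lexx hmM. Qed.

Lemma bl_ge0 B f : bl B f -> 0 <= B.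
Proof. case=> h _; exact: le_trans (normr_ge0 _) (h _ inr_m). Qed.

Lemma bl_le B B' f : B <= B' -> bl B f -> bl B' f.
Proof.
move=> le [h1 h2]; split=> [x hx|x1 x2 h h'].
  exact: le_trans (h1 _ hx) le.
apply: le_trans (h2 _ _ h h') _; apply: ler_wpM2r => //.
Qed.

Lemma bl_ext B f g : (forall x, inrng x -> f x = g x) -> bl B f -> bl B g.
Proof.
move=> e [h1 h2]; split=> [x hx|x1 x2 h h']; first by rewrite -e //; exact: h1.
by rewrite -!e //; exact: h2.
Qed.

Lemma bl_const k : bl `|k| (fun _ => k).
Proof. split=> // x1 x2 _ _; rewrite subrr normr0 mulr_ge0 //. Qed.

Lemma bl_zero : bl 0 (fun _ => 0).
Proof. by have := bl_const 0; rewrite normr0. Qed.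

Lemma bl_id : bl (`|m| + `|M| + 1) id.
Proof.
split=> [x /andP[h1 h2]|x1 x2 _ _].
  rewrite /=; case: (lerP 0 x) => hx.
    rewrite ger0_norm //; have : M <= `|M| by exact: ler_norm. 
    have := normr_ge0 m; lra.
  rewrite ltr0_norm //; have : - m <= `|m| by rewrite -normrN; exact: ler_norm.
  have := normr_ge0 M; lra.
rewrite /= ler_peMl //; have := normr_ge0 m; have := normr_ge0 M; lra.
Qed.

Lemma bl_add B1 B2 f g : bl B1 f -> bl B2 g -> bl (B1 + B2) (fun x => f x + g x).
Proof.
move=> [f1 f2] [g1 g2]; split=> [x hx|x1 x2 h h'].
  by apply: le_trans (ler_normD _ _) _; apply: lerD; auto.
rewrite (_ : f x1 + g x1 - (f x2 + g x2) = (f x1 - f x2) + (g x1 - g x2)); last by ring.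
apply: le_trans (ler_normD _ _) _; rewrite mulrDl; apply: lerD; auto.
Qed.

Lemma bl_opp B f : bl B f -> bl B (fun x => - f x).
Proof.
move=> [f1 f2]; split=> [x hx|x1 x2 h h']; first by rewrite normrN; auto.
by rewrite -opprD normrN; auto.
Qed.

Lemma bl_mul B1 B2 f g : bl B1 f -> bl B2 g -> bl (2 * B1 * B2) (fun x => f x * g x).
Proof.
move=> hf hg; have b1 := bl_ge0 hf; have b2 := bl_ge0 hg.
move: hf hg => [f1 f2] [g1 g2]; split=> [x hx|x1 x2 h h'].
  rewrite normrM; have := f1 _ hx; have := g1 _ hx.
  have := normr_ge0 (f x); have := normr_ge0 (g x); nra.
rewrite (_ : f x1 * g x1 - f x2 * g x2 = f x1 * (g x1 - g x2) + g x2 * (f x1 - f x2)); last by ring.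
apply: le_trans (ler_normD _ _) _; rewrite !normrM.
have := f1 _ h; have := g1 _ h'; have := f2 _ _ h h'; have := g2 _ _ h h'.
have := normr_ge0 (f x1); have := normr_ge0 (g x2); have := normr_ge0 (x1 - x2).
have := normr_ge0 (f x1 - f x2); have := normr_ge0 (g x1 - g x2).
move: (`|f x1|) (`|g x2|) (`|x1 - x2|) (`|f x1 - f x2|) (`|g x1 - g x2|) => a b c d e.
nra.
Qed.

Lemma bl_inv B c f : 0 < c -> (forall x, inrng x -> c <= f x) -> bl B f ->
  bl (B / c ^+ 2 + c^-1) (fun x => (f x)^-1).
Proof.
move=> c0 hc hf; have b0 := bl_ge0 hf; move: hf => [f1 f2].
have cc : 0 < c ^+ 2 by exact: exprn_gt0.
split=> [x hx|x1 x2 h h'].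
  have fx := hc _ hx; rewrite ger0_norm ?invr_ge0; last lra.
  have : (f x)^-1 <= c^-1 by rewrite lef_pV2 ?posrE //; lra.
  have : 0 <= B / c ^+ 2 by rewrite divr_ge0 // ltW.
  lra.
have fx1 := hc _ h; have fx2 := hc _ h'.
have p1 : 0 < f x1 by lra.
have p2 : 0 < f x2 by lra.
rewrite (_ : (f x1)^-1 - (f x2)^-1 = (f x2 - f x1) / (f x1 * f x2)); last first.
  by field; apply/andP; split; rewrite gt_eqF.
rewrite normrM normfV (gtr0_norm (mulr_gt0 p1 p2)) distrC.
have hl := f2 _ _ h h'.
have e1 : c ^+ 2 <= f x1 * f x2 by rewrite expr2; apply: ler_pM => //; lra.
have : `|f x1 - f x2| / (f x1 * f x2) <= `|f x1 - f x2| / c ^+ 2.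
  by apply: ler_wpM2l => //; rewrite lef_pV2 ?posrE // mulr_gt0.
have : `|f x1 - f x2| / c ^+ 2 <= B * `|x1 - x2| / c ^+ 2.
  by apply: ler_wpM2r => //; rewrite invr_ge0 ltW.
have : 0 <= c^-1 * `|x1 - x2| by rewrite mulr_ge0 // invr_ge0 ltW.
rewrite mulrDl mulrAC; lra.
Qed.

Definition bnd (f : R -> R -> R) := exists B, forall d, 0 <= d <= dstar -> bl B (f d).
Definition sml (f : R -> R -> R) := exists K, forall d, 0 <= d <= dstar -> bl (K * d) (f d).

Lemma bnd_const k : bnd (fun _ _ => k).
Proof. by exists `|k| => d _; exact: bl_const. Qed.

Lemma bnd_id : bnd (fun _ x => x).
Proof. by exists (`|m| + `|M| + 1) => d _; exact: bl_id. Qed.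

Lemma bnd_add f g : bnd f -> bnd g -> bnd (fun d x => f d x + g d x).
Proof. move=> [B1 h1] [B2 h2]; exists (B1 + B2) => d hd'; exact: bl_add (h1 _ hd') (h2 _ hd'). Qed.

Lemma bnd_opp f : bnd f -> bnd (fun d x => - f d x).
Proof. move=> [B1 h1]; exists B1 => d hd'; exact: bl_opp (h1 _ hd'). Qed.

Lemma bnd_sub f g : bnd f -> bnd g -> bnd (fun d x => f d x - g d x).
Proof. by move=> hf hg; apply: bnd_add hf (bnd_opp hg). Qed.

Lemma bnd_mul f g : bnd f -> bnd g -> bnd (fun d x => f d x * g d x).
Proof. move=> [B1 h1] [B2 h2]; exists (2 * B1 * B2) => d hd'; exact: bl_mul (h1 _ hd') (h2 _ hd'). Qed.

Lemma bnd_inv c f : 0 < c -> (forall d x, 0 <= d <= dstar -> inrng x -> c <= f d x) -> bnd f ->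
  bnd (fun d x => (f d x)^-1).
Proof.
move=> c0 hc [B h]; exists (B / c ^+ 2 + c^-1) => d hd'.
by apply: bl_inv c0 _ (h _ hd') => x hx; apply: hc.
Qed.

Lemma sml_d : sml (fun d _ => d).
Proof.
exists 1 => d /andP[d0 _]; rewrite mul1r.
by apply: bl_le (bl_const d); rewrite ger0_norm.
Qed.

Lemma sml_bnd f : sml f -> bnd f.
Proof.
move=> [K h]; exists (`|K| * dstar) => d hd'; apply: bl_le (h _ hd').
case/andP: hd' => d0 d1; apply: le_trans (ler_wpM2r d0 (ler_norm K)) _.
by apply: ler_wpM2l.
Qed.

Lemma sml_add f g : sml f -> sml g -> sml (fun d x => f d x + g d x).
Proof.
move=> [B1 h1] [B2 h2]; exists (B1 + B2) => d hd'; rewrite mulrDl.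
exact: bl_add (h1 _ hd') (h2 _ hd').
Qed.

Lemma sml_opp f : sml f -> sml (fun d x => - f d x).
Proof. move=> [B1 h1]; exists B1 => d hd'; exact: bl_opp (h1 _ hd'). Qed.

Lemma sml_sub f g : sml f -> sml g -> sml (fun d x => f d x - g d x).
Proof. by move=> hf hg; apply: sml_add hf (sml_opp hg). Qed.

Lemma sml_mul f g : sml f -> bnd g -> sml (fun d x => f d x * g d x).
Proof.
move=> [B1 h1] [B2 h2]; exists (2 * B1 * B2) => d hd'.
rewrite (_ : 2 * B1 * B2 * d = 2 * (B1 * d) * B2); last by ring.
exact: bl_mul (h1 _ hd') (h2 _ hd').
Qed.

Lemma sml_mulr f g : bnd f -> sml g -> sml (fun d x => f d x * g d x).
Proof.
move=> hf hg; have [K h] := sml_mul hg hf; exists K => d hd'.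
by apply: (bl_ext _ (h _ hd')) => x _; rewrite mulrC.
Qed.

Lemma sml_ext f g : (forall d x, 0 <= d <= dstar -> inrng x -> f d x = g d x) -> sml f -> sml g.
Proof. move=> e [K h]; exists K => d hd'; apply: (bl_ext _ (h _ hd')) => x hx; exact: e. Qed.

Lemma bnd_ext f g : (forall d x, 0 <= d <= dstar -> inrng x -> f d x = g d x) -> bnd f -> bnd g.
Proof. move=> e [K h]; exists K => d hd'; apply: (bl_ext _ (h _ hd')) => x hx; exact: e. Qed.

Lemma sml_sum (F : nat -> R -> R -> R) lo hi :
  (forall i, (lo <= i < hi)%N -> sml (F i)) ->
  sml (fun d x => \sum_(lo <= i < hi) F i d x).
Proof.
elim: hi => [|hi IH] h.
  exists 0 => d _; rewrite mul0r; apply: (bl_ext _ bl_zero) => x _.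
  by rewrite big_geq.
case: (leqP lo hi) => hl.
  have h1 : sml (fun d x => \sum_(lo <= i < hi) F i d x).
    by apply: IH => i /andP[a b]; apply: h; rewrite a ltnS ltnW.
  have h2 : sml (F hi) by apply: h; rewrite hl ltnSn.
  apply: (sml_ext _ (sml_add h1 h2)) => d x _ _; by rewrite big_nat_recr.
exists 0 => d _; rewrite mul0r; apply: (bl_ext _ bl_zero) => x _.
by rewrite big_geq.
Qed.

End BL.
Section Model.
Variable R : realType.
Variables (n : nat) (omega r mu : R) (p beta : nat -> R).
Hypothesis hn : (1 <= n)%N.
Hypothesis homega : 0 <= omega.
Hypothesis hmu : 0 < mu.
Hypothesis hp0 : p 0%N = 0.
Hypothesis hp : forall i, (1 <= i <= n)%N -> 0 <= p i <= 1.
Hypothesis hbeta : forall i, (i < n)%N -> beta i <= beta i.+1.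
Hypothesis hb0 : 0 < beta 0%N.

Local Notation om i := (p i * omega).
Local Notation de d i := ((1 - p i) * d).

Definition aa (d x : R) k := om k + de d k + beta k * x + mu.
Definition bb (x : R) := beta n * x + mu + om n.
Definition AA (x : R) := beta 0%N * x + mu.
Fixpoint u (d x : R) i := if i is k.+1 then u d x k * de d k / aa d x k.+1 else 1.
Definition PP d x := \sum_(1 <= i < n) om i * u d x i + om n * (de d n.-1 * u d x n.-1 / bb x).
Definition QQ d x := \sum_(1 <= i < n) beta i * u d x i + beta n * (de d n.-1 * u d x n.-1 / bb x).
Definition G d x := (beta 0%N + QQ d x) * (om n * mu + r * x * bb x)
   + (beta n * mu - (r + mu) * bb x) * (AA x + d - PP d x).
Definition ss d x := (om n * mu / bb x + r * x) / (AA x + d - PP d x).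
Definition Scand d x i :=
  if (i < n)%N then ss d x * u d x i
  else if i == n then (mu + de d n.-1 * (ss d x * u d x n.-1)) / bb x else 0.

Lemma beta_ge k : (k <= n)%N -> beta 0%N <= beta k.
Proof.
elim: k => [|k IH] hk; first by [].
apply: le_trans (IH (ltnW hk)) (hbeta hk).
Qed.

Lemma om_ge0 k : (1 <= k <= n)%N -> 0 <= om k.
Proof. by move=> /hp /andP[a _]; rewrite mulr_ge0. Qed.

Lemma aa_pos d x k : 0 <= d -> 0 <= x -> (1 <= k <= n)%N -> mu <= aa d x k.
Proof.
move=> d0 x0 hk; rewrite /aa; have /andP[a b] := hp hk.
have : 0 <= om k by rewrite mulr_ge0.
have : 0 <= de d k by rewrite mulr_ge0 // subr_ge0.
have : 0 <= beta k * x.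
  by rewrite mulr_ge0 // (le_trans (ltW hb0)) // beta_ge //; case/andP: hk.
lra.
Qed.

Lemma bb_pos x : 0 <= x -> mu <= bb x.
Proof.
move=> x0; rewrite /bb.
have : 0 <= om n by apply: om_ge0; rewrite hn leqnn.
have : 0 <= beta n * x by rewrite mulr_ge0 // (le_trans (ltW hb0)) // beta_ge.
lra.
Qed.

Lemma AA_pos x : 0 <= x -> mu <= AA x.
Proof. by move=> x0; rewrite /AA lerDr mulr_ge0 // ltW. Qed.

Lemma sum_split (f : nat -> R) : \sum_(i < n.+1) f i = f 0%N + \sum_(1 <= i < n) f i + f n.
Proof.
by rewrite -(big_mkord xpredT) big_ltn // big_nat_recr //= addrA.
Qed.

Lemma sum_split1 (f : nat -> R) : \sum_(1 <= i < n.+1) f i = \sum_(1 <= i < n) f i + f n.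
Proof. by rewrite big_nat_recr. Qed.

Lemma tele (g : nat -> R) k : (1 <= k)%N -> \sum_(1 <= i < k) (g i.-1 - g i) = g 0%N - g k.-1.
Proof.
case: k => // k _; rewrite big_add1 /=.
rewrite -[RHS]opprB -(telescope_sumr g (leq0n k)) -sumrN.
by apply: eq_bigr => i _; rewrite opprB.
Qed.

Lemma normalization d S x :
  \sum_(1 <= i < n.+1) om i * S i - d * S 0%N + r * x
        - beta 0%N * x * S 0%N - mu * S 0%N = 0 ->
  (forall i, (1 <= i < n)%N ->
         - om i * S i + de d i.-1 * S i.-1 - de d i * S i - beta i * x * S i
         - mu * S i = 0) ->
  mu - om n * S n + de d n.-1 * S n.-1 - beta n * x * S n - mu * S n = 0 ->
  x * (\sum_(i < n.+1) beta i * S i) - r * x - mu * x = 0 ->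
  \sum_(i < n.+1) S i + x = 1.
Proof.
move=> e1 emid en ei.
have hm : \sum_(1 <= i < n) (- om i * S i + de d i.-1 * S i.-1 - de d i * S i - beta i * x * S i
         - mu * S i) = 0.
  by rewrite big_nat (eq_bigr (fun _ => 0)) ?big1 // => i hi; apply: emid.
have e : \sum_(1 <= i < n) (- om i * S i + de d i.-1 * S i.-1 - de d i * S i - beta i * x * S i
         - mu * S i) = \sum_(1 <= i < n) (de d i.-1 * S i.-1 - de d i * S i)
           - \sum_(1 <= i < n) om i * S i - x * \sum_(1 <= i < n) beta i * S i
           - mu * \sum_(1 <= i < n) S i.
  by rewrite !mulr_sumr -!sumrB; apply: eq_bigr => i _; ring.
rewrite e (tele (fun i => de d i * S i) hn) hp0 in hm.
rewrite (sum_split1 (fun i => om i * S i)) in e1; rewrite (sum_split (fun i => beta i * S i)) in ei; rewrite sum_split.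
move: e1 ei hm en.
set A1 := \sum_(1 <= i < n) om i * S i.
set A2 := \sum_(1 <= i < n) beta i * S i.
set A3 := \sum_(1 <= i < n) S i.
move=> e1 ei hm en.
have : mu * (\sum_(1 <= i < n) S i + S 0%N + S n + x - 1) = 0.
  rewrite -/A3. 
  have -> : mu * (A3 + S 0%N + S n + x - 1) =
    - ((A1 + om n * S n - d * S 0%N + r * x - beta 0%N * x * S 0%N - mu * S 0%N)
     + ((1 - 0) * d * S 0%N - de d n.-1 * S n.-1 - A1 - x * A2 - mu * A3)
     + (mu - om n * S n + de d n.-1 * S n.-1 - beta n * x * S n - mu * S n)
     + (x * (beta 0%N * S 0%N + A2 + beta n * S n) - r * x - mu * x)) by ring.
  by rewrite e1 hm en ei !addr0 oppr0.
move/eqP; rewrite mulf_eq0 gt_eqF //= subr_eq0 => /eqP h.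
by rewrite -h /A3; ring.
Qed.


Lemma eq_struct d x S : 0 <= d -> 0 <= x -> is_equilibrium n d omega r mu p beta S x ->
  (forall i, (i < n)%N -> S i = S 0%N * u d x i).
Proof.
move=> d0 x0; rewrite /is_equilibrium /= => -[_ emid _ _ _].
elim=> [|i IH] hi; first by rewrite mulr1.
have ha : aa d x i.+1 != 0.
  by rewrite gt_eqF // (lt_le_trans hmu) // aa_pos // (ltnW hi).
have e := emid i.+1 (hi : (0 < i.+1 < n)%N); rewrite /= in e.
have e2 : S i.+1 * aa d x i.+1 = (1 - p i) * d * S i.
  apply/eqP; rewrite eq_sym -subr_eq0; apply/eqP; rewrite -e /aa; ring.
rewrite -(mulfK ha (S i.+1)) e2 IH ?(ltnW hi) //= ; ring.
Qed.

Lemma eq_to_G d x S : 0 <= d -> 0 < x -> AA x + d - PP d x != 0 ->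
  is_equilibrium n d omega r mu p beta S x ->
  G d x = 0 /\ forall i, (i <= n)%N -> S i = Scand d x i.
Proof.
move=> d0 x0 hP heq.
have hS := eq_struct d0 (ltW x0) heq.
move: heq; rewrite /is_equilibrium /= => -[e1 _ en ei _].
have hb : bb x != 0 by rewrite gt_eqF // (lt_le_trans hmu) // bb_pos // ltW.
have hn1 : (n.-1 < n)%N by rewrite prednK // ?leqnn // hn.
have hSn : S n = (mu + (1 - p n.-1) * d * (S 0%N * u d x n.-1)) / bb x.
  rewrite -hS // -[LHS](mulfK hb); congr (_ / _).
  apply/eqP; rewrite eq_sym -subr_eq0; apply/eqP; rewrite -en /bb; ring.
have s1 : \sum_(1 <= i < n) p i * omega * S i = S 0%N * \sum_(1 <= i < n) p i * omega * u d x i.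
  rewrite mulr_sumr big_nat [RHS]big_nat; apply: eq_bigr => i /andP[_ hi].
  by rewrite hS //; ring.
have s2 : \sum_(1 <= i < n) beta i * S i = S 0%N * \sum_(1 <= i < n) beta i * u d x i.
  rewrite mulr_sumr big_nat [RHS]big_nat; apply: eq_bigr => i /andP[_ hi].
  by rewrite hS //; ring.
rewrite (sum_split1 (fun i => p i * omega * S i)) s1 hSn in e1.
rewrite (sum_split (fun i => beta i * S i)) s2 hSn in ei.
have k1 : S 0%N * (AA x + d - PP d x) = p n * omega * mu / bb x + r * x.
  apply/eqP; rewrite eq_sym -subr_eq0; apply/eqP; rewrite -e1 /PP /AA; field.
  exact: hb.
have hs0 : S 0%N = ss d x by rewrite /ss -k1 mulfK.
have k2 : beta 0%N * S 0%N + S 0%N * \sum_(1 <= i < n) beta i * u d x i +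
     beta n * ((mu + (1 - p n.-1) * d * (S 0%N * u d x n.-1)) / bb x) = r + mu.
  have x0' : x != 0 by rewrite gt_eqF.
  apply/eqP; rewrite -subr_eq0; apply/eqP; apply: (mulfI x0'); rewrite mulr0.
  by rewrite -[X in _ = X]ei; ring.
split.
  have -> : G d x = (AA x + d - PP d x) * bb x * ((beta 0%N * S 0%N + S 0%N * \sum_(1 <= i < n) beta i * u d x i +
     beta n * ((mu + (1 - p n.-1) * d * (S 0%N * u d x n.-1)) / bb x)) - (r + mu))
     + (beta 0%N + QQ d x) * bb x * (p n * omega * mu / bb x + r * x - S 0%N * (AA x + d - PP d x)).
    rewrite /G /QQ /PP; field; exact: hb.
  by rewrite k2 k1 !subrr !mulr0 addr0.
move=> i; rewrite leq_eqVlt => /orP[/eqP ->|hi].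
  by rewrite hSn /Scand ltnn eqxx hs0.
by rewrite /Scand hi hS // hs0.
Qed.

Lemma Scand_lt d x i : (i < n)%N -> Scand d x i = ss d x * u d x i.
Proof. by move=> hi; rewrite /Scand hi. Qed.

Lemma Scand_n d x : Scand d x n = (mu + (1 - p n.-1) * d * (ss d x * u d x n.-1)) / bb x.
Proof. by rewrite /Scand ltnn eqxx. Qed.

Lemma G_to_eq d x : 0 <= d -> 0 < x -> AA x + d - PP d x != 0 -> G d x = 0 ->
  is_endemic_equilibrium n d omega r mu p beta (Scand d x) x.
Proof.
move=> d0 x0 hP hG; split; last by apply/eqP; rewrite gt_eqF.
have hb : bb x != 0 by rewrite gt_eqF // (lt_le_trans hmu) // bb_pos // ltW.
have hn1 : (n.-1 < n)%N by rewrite prednK // ?leqnn // hn.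
have k1 : ss d x * (AA x + d - PP d x) = p n * omega * mu / bb x + r * x.
  by rewrite /ss divfK.
have s1 : \sum_(1 <= i < n) p i * omega * Scand d x i = ss d x * \sum_(1 <= i < n) p i * omega * u d x i.
  rewrite mulr_sumr big_nat [RHS]big_nat; apply: eq_bigr => i /andP[_ hi].
  by rewrite Scand_lt //; ring.
have s2 : \sum_(1 <= i < n) beta i * Scand d x i = ss d x * \sum_(1 <= i < n) beta i * u d x i.
  rewrite mulr_sumr big_nat [RHS]big_nat; apply: eq_bigr => i /andP[_ hi].
  by rewrite Scand_lt //; ring.
have E1 : \sum_(1 <= i < n.+1) p i * omega * Scand d x i - d * Scand d x 0%N + r * x
        - beta 0%N * x * Scand d x 0%N - mu * Scand d x 0%N = 0.
  rewrite (sum_split1 (fun i => p i * omega * Scand d x i)) s1 Scand_n Scand_lt //= mulr1.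
  transitivity ((p n * omega * mu / bb x + r * x) - ss d x * (AA x + d - PP d x)); last by rewrite k1 subrr.
  rewrite /PP /AA; field; exact: hb.
have EM : forall i, (1 <= i < n)%N ->
         - (p i * omega) * Scand d x i + (1 - p i.-1) * d * Scand d x i.-1 - (1 - p i) * d * Scand d x i
         - beta i * x * Scand d x i - mu * Scand d x i = 0.
  case=> // k /andP[_ hk]; rewrite !Scand_lt ?(ltnW hk) //=.
  have ha : aa d x k.+1 != 0.
    by rewrite gt_eqF // (lt_le_trans hmu) // (@aa_pos d x k.+1 d0 (ltW x0) (ltnW hk)).
  move: ha; rewrite /aa => ha; field; exact: ha.
have EN : mu - p n * omega * Scand d x n + (1 - p n.-1) * d * Scand d x n.-1
        - beta n * x * Scand d x n - mu * Scand d x n = 0.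
  rewrite Scand_n Scand_lt //; move: hb; rewrite /bb => hb; field; exact: hb.
have EI : x * (\sum_(i < n.+1) beta i * Scand d x i) - r * x - mu * x = 0.
  rewrite (sum_split (fun i => beta i * Scand d x i)) s2 Scand_n Scand_lt //= mulr1.
  have : (AA x + d - PP d x) * bb x * (beta 0%N * ss d x + ss d x * \sum_(1 <= i < n) beta i * u d x i +
     beta n * ((mu + (1 - p n.-1) * d * (ss d x * u d x n.-1)) / bb x) - (r + mu)) = G d x.
    have -> : G d x = (AA x + d - PP d x) * bb x * ((beta 0%N * ss d x + ss d x * \sum_(1 <= i < n) beta i * u d x i +
     beta n * ((mu + (1 - p n.-1) * d * (ss d x * u d x n.-1)) / bb x)) - (r + mu))
     + (beta 0%N + QQ d x) * bb x * (p n * omega * mu / bb x + r * x - ss d x * (AA x + d - PP d x)).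
      rewrite /G /QQ /PP; field; exact: hb.
    by rewrite k1 subrr mulr0 addr0.
  rewrite hG.
  move/eqP; rewrite !mulf_eq0 (negbTE hP) (negbTE hb) /= subr_eq0 => /eqP ->; ring.
rewrite /is_equilibrium /=; split => //.
exact: normalization E1 EM EN EI.
Qed.


Definition G0 x := beta 0%N * (om n * mu + r * x * bb x) + (beta n * mu - (r + mu) * bb x) * AA x.
Definition E d x := QQ d x * (om n * mu + r * x * bb x) + (beta n * mu - (r + mu) * bb x) * (d - PP d x).
Definition q x := AA x * bb x + r * bb x - beta n * AA x - om n * beta 0%N.

Lemma G_split d x : G d x = G0 x + E d x.
Proof. rewrite /G /G0 /E; ring. Qed.

Lemma G0_q x : G0 x = - mu * q x.
Proof. rewrite /G0 /q /AA /bb; ring. Qed.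

Lemma root_q y : is_root_eq n omega r mu p beta y -> q y = 0.
Proof.
rewrite /is_root_eq /= => -[h1 h2 h3].
rewrite /q /AA /bb.
have -> : (beta 0%N * y + mu) * (beta n * y + mu + p n * omega) + r * (beta n * y + mu + p n * omega) -
  beta n * (beta 0%N * y + mu) - p n * omega * beta 0%N =
  ((beta 0%N * y + mu) * (beta n * y + mu + p n * omega)) *
  (1 + r / (beta 0%N * y + mu) - beta n / (beta n * y + mu + p n * omega) -
        p n * omega * beta 0%N / ((beta 0%N * y + mu) * (beta n * y + mu + p n * omega))).
  by field; apply/andP; split.
by rewrite h3 mulr0.
Qed.

Lemma q_fact y1 y2 : q y1 = 0 -> q y2 = 0 -> y1 != y2 ->
  forall x, q x = beta 0%N * beta n * (x - y1) * (x - y2).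
Proof.
move=> e1 e2 ne x.
set c2 := beta 0%N * beta n.
set c1 := beta 0%N * (mu + om n) + mu * beta n + r * beta n - beta n * beta 0%N.
set c0 := mu * (mu + om n) + r * (mu + om n) - beta n * mu - om n * beta 0%N.
have qE z : q z = c2 * z ^+ 2 + c1 * z + c0 by rewrite /q /AA /bb /c2 /c1 /c0; ring.
rewrite qE in e1; rewrite qE in e2.
have hc1 : c1 = - c2 * (y1 + y2).
  have : (y1 - y2) * (c1 + c2 * (y1 + y2)) = 0.
    by rewrite -[X in _ = X](subrr 0) -{1}e1 -e2; ring.
  move/eqP; rewrite mulf_eq0 subr_eq0 (negbTE ne) /= addr_eq0 => /eqP ->; ring.
have hc0 : c0 = c2 * y1 * y2.
  apply/eqP; rewrite -subr_eq0; apply/eqP; rewrite -[X in _ = X]e1 hc1; ring.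
rewrite qE hc1 hc0; ring.
Qed.

Section Analytic.
Variables m M dstar : R.
Hypothesis hm0 : 0 < m.
Hypothesis hmM : m <= M.
Hypothesis hds : 0 <= dstar.

Local Notation bnd := (bnd m M dstar).
Local Notation sml := (sml m M dstar).
Local Notation bnd_mul := (bnd_mul hmM).
Local Notation sml_mul := (sml_mul hmM).
Local Notation sml_mulr := (sml_mulr hmM).
Local Notation bnd_inv := (bnd_inv hmM).
Local Notation sml_d := (sml_d m M dstar).
Local Notation bnd_id := (bnd_id m M dstar).

Lemma x_ge0 x : inrng m M x -> 0 <= x.
Proof. by case/andP=> a _; apply: le_trans (ltW hm0) a. Qed.

Lemma de_sml k : sml (fun d _ => (1 - p k) * d).
Proof. apply: sml_mulr; [exact: bnd_const | exact: sml_d]. Qed.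

Lemma aa_bnd k : bnd (fun d x => aa d x k).
Proof.
rewrite /aa; apply: bnd_add; last exact: bnd_const.
apply: bnd_add; last by apply: bnd_mul; [exact: bnd_const | exact: bnd_id].
apply: bnd_add; first exact: bnd_const.
apply: sml_bnd => //; exact: de_sml.
Qed.

Lemma u_sml i : (i < n)%N -> bnd (fun d x => u d x i) /\ ((0 < i)%N -> sml (fun d x => u d x i)).
Proof.
elim: i => [|i IH] hi; first by split => //; exact: bnd_const 1.
have [b _] := IH (ltnW hi).
have hinv : bnd (fun d x => (aa d x i.+1)^-1).
  apply: (bnd_inv (c:=mu)) => //; last exact: aa_bnd.
  move=> d x /andP[d0 _] hx; apply: aa_pos => //; first exact: x_ge0.
  exact: ltnW.
have s : sml (fun d x => u d x i.+1).
  have s' : sml (fun d x => u d x i * ((1 - p i) * d) * (aa d x i.+1)^-1).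
    apply: (sml_mul _ hinv).
    exact: (sml_mulr b (de_sml i)).
  exact: s'.
split; [exact: sml_bnd s | by move=> _].
Qed.

Lemma bb_inv_bnd : bnd (fun _ x => (bb x)^-1).
Proof.
apply: (bnd_inv (c:=mu)) => //.
  by move=> d x _ hx; apply: bb_pos; exact: x_ge0.
rewrite /bb; apply: bnd_add; last exact: bnd_const.
apply: bnd_add; last exact: bnd_const.
apply: bnd_mul; [exact: bnd_const | exact: bnd_id].
Qed.

Lemma tail_sml : sml (fun d x => (1 - p n.-1) * d * u d x n.-1 / bb x).
Proof.
have hn1 : (n.-1 < n)%N by rewrite prednK // ?leqnn // hn.
apply: sml_mul bb_inv_bnd; apply: sml_mul (proj1 (u_sml hn1)); exact: de_sml.
Qed.

Lemma PP_sml : sml PP.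
Proof.
rewrite /PP; apply: sml_add; last by apply: sml_mulr tail_sml; exact: bnd_const.
apply: sml_sum => i /andP[h1 h2]; apply: sml_mulr; first exact: bnd_const.
exact: (proj2 (u_sml h2) h1).
Qed.

Lemma QQ_sml : sml QQ.
Proof.
rewrite /QQ; apply: sml_add; last by apply: sml_mulr tail_sml; exact: bnd_const.
apply: sml_sum => i /andP[h1 h2]; apply: sml_mulr; first exact: bnd_const.
exact: (proj2 (u_sml h2) h1).
Qed.

Lemma bb_bnd : bnd (fun _ x => bb x).
Proof.
rewrite /bb; apply: bnd_add; last exact: bnd_const.
apply: bnd_add; last exact: bnd_const.
apply: bnd_mul; [exact: bnd_const | exact: bnd_id].
Qed.

Lemma E_sml : sml E.
Proof.
rewrite /E; apply: sml_add.
  apply: sml_mul QQ_sml _; apply: bnd_add; first exact: bnd_const.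
  apply: bnd_mul bb_bnd; apply: bnd_mul bnd_id; exact: bnd_const.
apply: sml_mulr; last by apply: sml_sub; [exact: sml_d | exact: PP_sml].
apply: bnd_sub; first exact: bnd_const.
apply: bnd_mul bb_bnd; exact: bnd_const.
Qed.

Lemma G0_bnd : bnd (fun _ x => G0 x).
Proof.
rewrite /G0; apply: bnd_add.
  apply: bnd_mul; first exact: bnd_const.
  apply: bnd_add; first exact: bnd_const.
  apply: bnd_mul bb_bnd; apply: bnd_mul bnd_id; exact: bnd_const.
apply: bnd_mul; last by rewrite /AA; apply: bnd_add; [apply: bnd_mul bnd_id; exact: bnd_const | exact: bnd_const].
apply: bnd_sub; first exact: bnd_const.
apply: bnd_mul bb_bnd; exact: bnd_const.
Qed.

End Analytic.


Lemma main_sec (C y1 y2 y : R) :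
  is_root_eq n omega r mu p beta y1 -> is_root_eq n omega r mu p beta y2 ->
  0 < C -> (y = y1 \/ y = y2) ->
  exists d0 : R, 0 < d0 /\ forall delta : R, 0 <= delta < d0 ->
    (forall x, in_J C delta y x -> 0 < x <= 1) ->
    `|y1 - y2| >= delta `^ (3%:R)^-1 ->
    exists S : nat -> R, exists I : R,
      [/\ is_endemic_equilibrium n delta omega r mu p beta S I,
          in_J C delta y I
        & forall (S' : nat -> R) (I' : R),
            is_endemic_equilibrium n delta omega r mu p beta S' I' ->
            in_J C delta y I' ->
            I' = I /\ forall i, (i <= n)%N -> S' i = S i].
Proof.
move=> r1 r2 C0 hy.
have hmu2 : 0 < mu := hmu. have hb02 : 0 < beta 0%N := hb0.
have qy : q y = 0 by case: hy => ->; apply: root_q.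
case: (lerP y 0) => y0.
  exists 1; split => // d /andP[d0 _] hJ _; exfalso.
  have : in_J C d y y.
    have := mulr_ge0 (ltW C0) (sqrtr_ge0 d); rewrite /in_J => h.
    apply/andP; split; lra.
  by move/hJ => /andP[h _]; lra.
pose m := y / 2; pose M := y + 1.
have hm0 : 0 < m by rewrite /m; lra.
have hmM : m <= M by rewrite /m /M; lra.
have h01 : (0 : R) <= 1 by [].
have [KE hKE] : sml m M 1 E by apply: E_sml.
have [KP hKP] : sml m M 1 PP by apply: PP_sml.
have [L0 hL0] : bnd m M 1 (fun _ x => G0 x) by apply: G0_bnd.
have hd1 : 0 <= (1 : R) <= 1 by rewrite ler01 lexx.
have KE0 : 0 <= KE by have := bl_ge0 hmM (hKE 1 hd1); rewrite mulr1.
have KP0 : 0 <= KP by have := bl_ge0 hmM (hKP 1 hd1); rewrite mulr1.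
have L00 : 0 <= L0 by have := bl_ge0 hmM (hL0 1 hd1).
have hden : forall d x, 0 <= d <= 1 -> inrng m M x -> KP * d <= mu / 2 -> AA x + d - PP d x != 0.
  move=> d x hd hx hk; have [h1 _] := hKP d hd; have := h1 x hx.
  have := AA_pos (x_ge0 hm0 hx); case/andP: hd => d0 _.
  rewrite ler_norml => ha /andP[_ hb]; apply/eqP => e.
have hm2 : 0 < mu by []. lra.
case: (eqVneq y1 y2) => [e12|ne12].
  (* degenerate case: only delta = 0 *)
  exists 1; split => // d /andP[d0 d1] hJ hpow.
  have dz : d = 0.
    move: hpow; rewrite e12 subrr normr0; case: (ltrgt0P d) => // dpos.
    by have := powR_gt0 (3%:R)^-1 dpos; rewrite ltNge => /negbTE ->.
    by move=> _; lra.
  subst d.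
  have hJy : forall x, in_J C 0 y x -> x = y.
    by move=> x; rewrite /in_J sqrtr0 mulr0 subr0 addr0 => h; apply/eqP; rewrite eq_le andbC.
  have hyJ : in_J C 0 y y by rewrite /in_J sqrtr0 mulr0 subr0 addr0 lexx.
  have /andP[ypos _] := hJ y hyJ.
  have hdz : 0 <= (0 : R) <= 1 by rewrite ler01 lexx.
  have hyr : inrng m M y by rewrite /inrng /m /M; apply/andP; split; lra.
  have hAP : AA y + 0 - PP 0 y != 0 by apply: hden => //; rewrite mulr0; lra.
  have hG : G 0 y = 0.
    rewrite G_split G0_q qy mulr0 add0r.
    have [h1 _] := hKE 0 hdz; have := h1 y hyr; rewrite mulr0 normr_le0 => /eqP //.
  exists (Scand 0 y), y; split => //.
    exact: G_to_eq.
  move=> S' I' [heq hI] hJ'; have e := hJy _ hJ'; subst I'.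
  split => //; have [_ hS] := eq_to_G (lexx 0) ypos hAP heq; exact: hS.
have [y' [hq hne]] : exists y', (forall x, q x = beta 0%N * beta n * (x - y) * (x - y')) /\ y != y'.
  case: hy => ->.
    by exists y2; split => //; exact: q_fact (root_q r1) (root_q r2) ne12.
  exists y1; split; last by rewrite eq_sym.
  by move=> x; rewrite (q_fact (root_q r1) (root_q r2) ne12); ring.
pose k := mu * (beta 0%N * beta n).
have bn0 : 0 < beta n := lt_le_trans hb0 (beta_ge (leqnn n)).
have k0 : 0 < k by rewrite /k !mulr_gt0.
have hG0 : forall x, G0 x = - k * ((x - y) * (x - y')) by move=> x; rewrite G0_q hq /k; ring.
pose dd := `|y - y'|.
have dd0 : 0 < dd by rewrite /dd normr_gt0 subr_eq0.
have a1 : 0 < y / (2 * C) by apply: divr_gt0 => //; apply: mulr_gt0.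
have a2 : 0 < 1 / C by apply: divr_gt0.
have a3 : 0 < dd / (4 * C) by apply: divr_gt0 => //; apply: mulr_gt0.
have a5 : 0 < k * C * dd / (4 * (KE + 1)) by apply: divr_gt0; rewrite ?mulr_gt0 //; lra.
have a6 : 0 < mu / (2 * (KP + 1)) by apply: divr_gt0; rewrite ?mulr_gt0 //; lra.
pose t0 := Num.min (y / (2 * C)) (Num.min (1 / C) (Num.min (dd / (4 * C)) (Num.min 1
   (Num.min (k * C * dd / (4 * (KE + 1))) (mu / (2 * (KP + 1))))))).
have t0pos : 0 < t0 by rewrite /t0 !lt_min a1 a2 a3 ltr01 a5 a6.
exists (t0 * t0); split; first exact: mulr_gt0.
move=> d /andP[d0 dlt] hJ _.
have tlt : Num.sqrt d < t0.
  by rewrite -(gtr0_norm t0pos) -sqrtr_sqr ltr_sqrt ?expr2 // mulr_gt0.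
have tt := sqr_sqrtr d0; have tpos := sqrtr_ge0 d.
rewrite /in_J in hJ *.
set t := Num.sqrt d in hJ tt tpos tlt *; clearbody t.
move: tlt; rewrite {1}/t0 !lt_min => /andP[b1 /andP[b2 /andP[b3 /andP[b4 /andP[b5 b6]]]]].
rewrite ltr_pdivlMr ?mulr_gt0 // in b1.
rewrite ltr_pdivlMr // in b2.
rewrite ltr_pdivlMr ?mulr_gt0 // in b3.
rewrite ltr_pdivlMr ?mulr_gt0 // in b5; last lra.
rewrite ltr_pdivlMr ?mulr_gt0 // in b6; last lra.
rewrite expr2 in tt.
have d1 : d <= 1 by rewrite -tt; nra.
have hd : 0 <= d <= 1 by rewrite d0 d1.
have e5 : KE * t <= k * C * dd / 4 by nra.
have KEd : KE * d <= k * (C * t) * dd / 4.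
  rewrite -tt; have := ler_wpM2r tpos e5; lra.
have KPd : KP * d <= mu / 2 by rewrite -tt; nra.
have hh : C * t <= dd / 4 by lra.
have hh1 : C * t <= 1 by lra.
have h0 : 0 <= C * t by rewrite mulr_ge0 // ltW.
have hJr : forall x, y - C * t <= x <= y + C * t -> inrng m M x.
  by move=> x /andP[u v]; rewrite /inrng /m /M; apply/andP; split; lra.
have [hEb hEl] := hKE d hd.
have [hG0b hG0l] := hL0 d hd.
have [c [hc Gc]] : exists c, y - C * t <= c <= y + C * t /\ G d c = 0.
  apply: (@ivt_lip _ (G d) _ _ (L0 + KE * d)); first lra.
  - by rewrite addr_ge0 // mulr_ge0.
  - move=> x1 x2 h1 h2; rewrite !G_split.
    rewrite (_ : G0 x1 + E d x1 - (G0 x2 + E d x2) = (G0 x1 - G0 x2) + (E d x1 - E d x2)); last by ring.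
    apply: le_trans (ler_normD _ _) _; rewrite mulrDl; apply: lerD.
      exact: hG0l (hJr _ h1) (hJr _ h2).
    exact: hEl (hJr _ h1) (hJr _ h2).
  have hpp : y - C * t <= y + C * t <= y + C * t by rewrite lexx andbT; lra.
  have hmm : y - C * t <= y - C * t <= y + C * t by rewrite lexx /=; lra.
  have := sign_help k0 h0 hh KEd (hEb _ (hJr _ hpp)) (hEb _ (hJr _ hmm)).
  by rewrite /= !G_split !hG0.
have cpos : 0 < c by case/andP: hc => u v; lra.
have hAP : forall x, y - C * t <= x <= y + C * t -> AA x + d - PP d x != 0.
  by move=> x hx; apply: hden => //; exact: hJr.
exists (Scand d c), c; split => //.
  exact: G_to_eq d0 cpos (hAP _ hc) Gc.
move=> S' I' [heq hI] hJ'.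
have I'pos : 0 < I' by case/andP: hJ' => u v; lra.
have [GI' hS'] := eq_to_G d0 I'pos (hAP _ hJ') heq.
suff e : I' = c by subst I'; split.
apply: (uniq_help k0 h0 hh1 hne hh KEd hJ' hc).
have := hEl _ _ (hJr _ hJ') (hJr _ hc).
have e1 := G_split d I'; have e2 := G_split d c.
rewrite GI' in e1; rewrite Gc in e2.
have -> : E d I' - E d c = k * (I' - c) * (I' + c - y - y').
  have -> : E d I' = - G0 I' by apply/eqP; rewrite -addr_eq0 addrC -e1.
  have -> : E d c = - G0 c by apply/eqP; rewrite -addr_eq0 addrC -e2.
  rewrite !hG0; ring.
by [].
Qed.

End Model.
Theorem lemma2 (R : realType) (n : nat) (omega r mu : R) (p beta : nat -> R)
    (C y1 y2 y : R) :
  (1 <= n)%N -> 0 <= omega -> 0 < r -> 0 < mu ->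
  p 0%N = 0 -> (forall i, (1 <= i <= n)%N -> 0 <= p i <= 1) ->
  (forall i, (i < n)%N -> beta i <= beta i.+1) -> beta 0%N < beta n ->
  0 < beta 0%N ->
  (* y1 <= y2 are the real roots of the equation *)
  is_root_eq n omega r mu p beta y1 -> is_root_eq n omega r mu p beta y2 ->
  (forall x, is_root_eq n omega r mu p beta x -> x = y1 \/ x = y2) ->
  y1 <= y2 ->
  (* the constant C *)
  0 < C ->
  (exists d1 : R, 0 < d1 /\ forall delta : R, 0 <= delta < d1 ->
     forall (S : nat -> R) (I : R),
       is_endemic_equilibrium n delta omega r mu p beta S I -> 0 <= I <= 1 ->
       in_J C delta y1 I \/ in_J C delta y2 I) ->
  (* i in {1,2}: y = y_i *)
  (y = y1 \/ y = y2) ->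
  exists d0 : R, 0 < d0 /\ forall delta : R, 0 <= delta < d0 ->
    (* J_i is contained in (0,1] *)
    (forall x, in_J C delta y x -> 0 < x <= 1) ->
    `|y1 - y2| >= delta `^ (3%:R)^-1 ->
    exists S : nat -> R, exists I : R,
      [/\ is_endemic_equilibrium n delta omega r mu p beta S I,
          in_J C delta y I
        & forall (S' : nat -> R) (I' : R),
            is_endemic_equilibrium n delta omega r mu p beta S' I' ->
            in_J C delta y I' ->
            I' = I /\ forall i, (i <= n)%N -> S' i = S i].
Proof.
move=> hn hom hr hmu hp0 hp hbeta hbn hb0 r1 r2 hall hle hC _ hy.
exact: (main_sec hn hom hmu hp0 hp hbeta hb0 r1 r2 hC hy).
Qed.
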